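(* Let $\mathcal K$ be a variety of WHB-algebras that has a tense companion $\mathcal N$. Then $\mathcal K$ has the finite model property if and only if $\mathcal N$ has the finite model property.
   Context: A WHB-algebra is an algebra $(A,\wedge,\vee,\to,\leftarrow,0,1)$ such that $(A,\wedge,\vee,0,1)$ is a bounded distributive lattice and for all $a,b,c\in A$: $a\to a=1$; $a\to(b\wedge c)=(a\to b)\wedge(a\to c)$; $(a\vee b)\to c=(a\to c)\wedge(b\to c)$; $(a\to b)\wedge(b\to c)\le a\to c$; $a\leftarrow a=0$; $(a\vee b)\leftarrow c=(a\leftarrow c)\vee(b\leftarrow c)$; $a\leftarrow(b\wedge c)=(a\leftarrow b)\vee(a\leftarrow c)$; $a\leftarrow c\le(a\leftarrow b)\vee(b\leftarrow c)$; $a\wedge((a\to b)\leftarrow 0)\le b$; $a\le b\vee(1\to(a\leftarrow b))$. A tense algebra is $(\mathbf B,G,H)$ with $\mathbf B$ a Boolean algebra and unary $G,H$ such that, with $P(x)=\neg H(\neg x)$, $F(x)=\neg G(\neg x)$: $P(x)\le y\iff x\le G(y)$ and $F(x)\le y\iff x\le H(y)$. $M(\mathbf B,G,H)$ is the WHB-algebra on $B$ with $x\to y=G(\neg x\vee y)$, $x\leftarrow y=P(x\wedge\neg y)$. For a WHB-algebra $\mathbf A$: $X(\mathbf A)$ is its set of prime filters, $\sigma_{\mathbf A}(a)=\{P\colon a\in P\}$, $\tau_{\mathbf A}$ the topology with subbase $\{\sigma_{\mathbf A}(a)\}\cup\{X(\mathbf A)\setminus\sigma_{\mathbf A}(a)\}$;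 $(P,Q)\in R_{\mathbf A}$ iff for all $a,b$ ($a\to b\in P$, $a\in Q$ imply $b\in Q$); $(P,Q)\in S_{\mathbf A}$ iff for all $a,b$ ($a\in Q$, $b\notin Q$ imply $a\leftarrow b\in P$); $T(\mathbf A)$ is the Boolean algebra of $\tau_{\mathbf A}$-clopen subsets of $X(\mathbf A)$ with $G_{\mathbf A}(U)=\{P\colon R_{\mathbf A}(P)\subseteq U\}$, $H_{\mathbf A}(U)=\{P\colon S_{\mathbf A}(P)\subseteq U\}$. A variety $\mathcal N$ of tense algebras is a tense companion of a variety $\mathcal K$ of WHB-algebras if $T(\mathbf A)\in\mathcal N$ for all $\mathbf A\in\mathcal K$ and $M(\mathbf B)\in\mathcal K$ for all $\mathbf B\in\mathcal N$. A variety has the finite model property if every equation failing in some member fails in some finite member. *)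

(* Defs.v *)
From Stdlib Require Import List Classical ClassicalDescription.
Import ListNotations.
Set Implicit Arguments.

Inductive wterm : Type :=
| wvar : nat -> wterm
| wmeet : wterm -> wterm -> wterm
| wjoin : wterm -> wterm -> wterm
| wimp : wterm -> wterm -> wterm
| wcoimp : wterm -> wterm -> wterm
| wzero : wterm
| wone : wterm.

Inductive tterm : Type :=
| tvar : nat -> tterm
| tmeet : tterm -> tterm -> tterm
| tjoin : tterm -> tterm -> tterm
| tneg : tterm -> tterm
| tzero : tterm
| tone : tterm
| tG : tterm -> tterm
| tH : tterm -> tterm.

Record whb_ops : Type := WhbOps {
  wcar : Type;
  wm : wcar -> wcar -> wcar;
  wj : wcar -> wcar -> wcar;
  wi : wcar -> wcar -> wcar;
  wc : wcar -> wcar -> wcar;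
  w0 : wcar;
  w1 : wcar }.

Record tense_ops : Type := TenseOps {
  tcar : Type;
  tm : tcar -> tcar -> tcar;
  tj : tcar -> tcar -> tcar;
  tn : tcar -> tcar;
  t0 : tcar;
  t1 : tcar;
  tGo : tcar -> tcar;
  tHo : tcar -> tcar }.

Fixpoint weval (A : whb_ops) (v : nat -> wcar A) (t : wterm) : wcar A :=
  match t with
  | wvar n => v n
  | wmeet s u => wm A (weval A v s) (weval A v u)
  | wjoin s u => wj A (weval A v s) (weval A v u)
  | wimp s u => wi A (weval A v s) (weval A v u)
  | wcoimp s u => wc A (weval A v s) (weval A v u)
  | wzero => w0 A
  | wone => w1 A
  end.

Fixpoint teval (B : tense_ops) (v : nat -> tcar B) (t : tterm) : tcar B :=
  match t with
  | tvar n => v n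
  | tmeet s u => tm B (teval B v s) (teval B v u)
  | tjoin s u => tj B (teval B v s) (teval B v u)
  | tneg s => tn B (teval B v s)
  | tzero => t0 B
  | tone => t1 B
  | tG s => tGo B (teval B v s)
  | tH s => tHo B (teval B v s)
  end.

Definition wsat (A : whb_ops) (e : wterm * wterm) : Prop :=
  forall v : nat -> wcar A, weval A v (fst e) = weval A v (snd e).

Definition tsat (B : tense_ops) (e : tterm * tterm) : Prop :=
  forall v : nat -> tcar B, teval B v (fst e) = teval B v (snd e).

Definition bdl_axioms (T : Type) (m j : T -> T -> T) (z o : T) : Prop :=
  (forall a b c, m a (m b c) = m (m a b) c) /\
  (forall a b, m a b = m b a) /\
  (forall a b c, j a (j b c) = j (j a b) c) /\
  (forall a b, j a b = j b a) /\
  (forall a b, m a (j a b) = a) /\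
  (forall a b, j a (m a b) = a) /\
  (forall a b c, m a (j b c) = j (m a b) (m a c)) /\
  (forall a, j a z = a) /\
  (forall a, m a o = a).

Definition wle (A : whb_ops) (a b : wcar A) : Prop := wm A a b = a.

Definition is_whb (A : whb_ops) : Prop :=
  bdl_axioms (wm A) (wj A) (w0 A) (w1 A) /\
  (forall a, wi A a a = w1 A) /\
  (forall a b c, wi A a (wm A b c) = wm A (wi A a b) (wi A a c)) /\
  (forall a b c, wi A (wj A a b) c = wm A (wi A a c) (wi A b c)) /\
  (forall a b c, wle A (wm A (wi A a b) (wi A b c)) (wi A a c)) /\
  (forall a, wc A a a = w0 A) /\
  (forall a b c, wc A (wj A a b) c = wj A (wc A a c) (wc A b c)) /\
  (forall a b c, wc A a (wm A b c) = wj A (wc A a b) (wc A a c)) /\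
  (forall a b c, wle A (wc A a c) (wj A (wc A a b) (wc A b c))) /\
  (forall a b, wle A (wm A a (wc A (wi A a b) (w0 A))) b) /\
  (forall a b, wle A a (wj A b (wi A (w1 A) (wc A a b)))).

Definition tle (B : tense_ops) (a b : tcar B) : Prop := tm B a b = a.
Definition tP (B : tense_ops) (x : tcar B) : tcar B := tn B (tHo B (tn B x)).
Definition tF (B : tense_ops) (x : tcar B) : tcar B := tn B (tGo B (tn B x)).

Definition is_boolean (B : tense_ops) : Prop :=
  bdl_axioms (tm B) (tj B) (t0 B) (t1 B) /\
  (forall a, tm B a (tn B a) = t0 B) /\
  (forall a, tj B a (tn B a) = t1 B).

Definition is_tense (B : tense_ops) : Prop :=
  is_boolean B /\
  (forall x y, tle B (tP B x) y <-> tle B x (tGo B y)) /\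
  (forall x y, tle B (tF B x) y <-> tle B x (tHo B y)).

Definition whb_variety (K : whb_ops -> Prop) : Prop :=
  exists E : wterm * wterm -> Prop,
    forall A, K A <-> (is_whb A /\ forall e, E e -> wsat A e).

Definition tense_variety (N : tense_ops -> Prop) : Prop :=
  exists E : tterm * tterm -> Prop,
    forall B, N B <-> (is_tense B /\ forall e, E e -> tsat B e).

Definition M (B : tense_ops) : whb_ops :=
  {| wcar := tcar B;
     wm := tm B;
     wj := tj B;
     wi := fun x y => tGo B (tj B (tn B x) y);
     wc := fun x y => tP B (tm B x (tn B y));
     w0 := t0 B;
     w1 := t1 B |}.

Section TConstruction.
Variable A : whb_ops.

Definition prime_filter (P : wcar A -> Prop) : Prop :=
  P (w1 A) /\
  (forall a b, P a -> wle A a b -> P b) /\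
  (forall a b, P a -> P b -> P (wm A a b)) /\
  ~ P (w0 A) /\
  (forall a b, P (wj A a b) -> P a \/ P b).

Definition Xp : Type := { P : wcar A -> Prop | prime_filter P }.

Definition sigmaA (a : wcar A) : Xp -> Prop := fun P => proj1_sig P a.

(* Subbasic sets: (a, true) stands for sigma_A(a), (a, false) for its
   complement X(A) \ sigma_A(a). *)
Definition subbasic (c : wcar A * bool) : Xp -> Prop :=
  fun P => if snd c then sigmaA (fst c) P else ~ sigmaA (fst c) P.

(* Open sets of the topology tau_A generated by the subbase: unions of finite
   intersections of subbasic sets. *)
Definition tau_open (U : Xp -> Prop) : Prop :=
  forall x, U x ->
    exists l : list (wcar A * bool),
      (forall c, In c l -> subbasic c x) /\
      (forall y, (forall c, In c l -> subbasic c y) -> U y).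

Definition clopen (U : Xp -> Prop) : Prop :=
  tau_open U /\ tau_open (fun x => ~ U x).

Definition RA (P Q : Xp) : Prop :=
  forall a b, proj1_sig P (wi A a b) -> proj1_sig Q a -> proj1_sig Q b.

Definition SA (P Q : Xp) : Prop :=
  forall a b, proj1_sig Q a -> ~ proj1_sig Q b -> proj1_sig P (wc A a b).

Definition GA (U : Xp -> Prop) : Xp -> Prop :=
  fun P => forall Q, RA P Q -> U Q.
Definition HA (U : Xp -> Prop) : Xp -> Prop :=
  fun P => forall Q, SA P Q -> U Q.

Definition Clop : Type := { U : Xp -> Prop | clopen U }.

Lemma full_clopen : clopen (fun _ => True).
Proof.
  split.
  - intros x _. exists nil. split; [intros c []| auto].
  - intros x H. exfalso. exact (H I).
Qed.

(* It is the identity on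
   clopen sets; all the uses below are on sets that are clopen (for G_A and
   H_A by the results of the paper), so the fallback value is never used in
   the intended reading. *)
Definition toClop (V : Xp -> Prop) : Clop :=
  match excluded_middle_informative (clopen V) with
  | left h => exist _ V h
  | right _ => exist _ (fun _ => True) full_clopen
  end.

Definition T : tense_ops :=
  {| tcar := Clop;
     tm := fun U V => toClop (fun x => proj1_sig U x /\ proj1_sig V x);
     tj := fun U V => toClop (fun x => proj1_sig U x \/ proj1_sig V x);
     tn := fun U => toClop (fun x => ~ proj1_sig U x);
     t0 := toClop (fun _ => False);
     t1 := toClop (fun _ => True);
     tGo := fun U => toClop (GA (proj1_sig U));
     tHo := fun U => toClop (HA (proj1_sig U)) |}.

End TConstruction.

Definition tense_companion (K : whb_ops -> Prop) (N : tense_ops -> Prop) : Prop :=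
  (forall A, K A -> N (T A)) /\ (forall B, N B -> K (M B)).

Definition wfinite (A : whb_ops) : Prop := exists l : list (wcar A), forall x, In x l.
Definition tfinite (B : tense_ops) : Prop := exists l : list (tcar B), forall x, In x l.

Definition whb_fmp (K : whb_ops -> Prop) : Prop :=
  forall e : wterm * wterm,
    (exists A, K A /\ ~ wsat A e) -> exists A, K A /\ wfinite A /\ ~ wsat A e.

Definition tense_fmp (N : tense_ops -> Prop) : Prop :=
  forall e : tterm * tterm,
    (exists B, N B /\ ~ tsat B e) -> exists B, N B /\ tfinite B /\ ~ tsat B e.

(* Main.v *)
Require Import Defs.
From Stdlib Require Import List Classical ClassicalDescription FunctionalExtensionality PropExtensionality.
Import ListNotations.
From mathcomp Require ssreflect ssrbool classical_sets boolp.
Module ZornW.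
Import ssreflect ssrbool classical_sets.
Local Open Scope classical_set_scope.
Lemma my_zorn (T : Type) (P : (T -> Prop) -> Prop) :
 (forall F : (T->Prop) -> Prop, (forall X, F X -> P X) ->
   (forall X Y, F X -> F Y -> (forall x, X x -> Y x) \/ (forall x, Y x -> X x)) ->
   P (fun x => exists X, F X /\ X x)) ->
 exists A, P A /\ forall B, (forall x, A x -> B x) -> P B -> forall x, B x -> A x.
Proof.
move=> H.
have [F FP tot|A [PA Amax]] := @Zorn_bigcup T P.
  have -> : (\bigcup_(X in F) X) = (fun x => exists X, F X /\ X x).
    by rewrite boolp.funeqE => x; rewrite boolp.propeqE; split => [[X FX Xx]|[X [FX Xx]]]; exists X.
  by apply: H => //.
exists A; split => // B AB PB x Bx.
apply: NNPP => nAx; apply: (Amax B) => //; split; first by move=> y; apply: AB.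
by move=> BA; apply: nAx; apply: BA.
Qed.
End ZornW.

Section Lat.
Variable A : whb_ops.
Variable HA : bdl_axioms (wm A) (wj A) (w0 A) (w1 A).
Local Notation m := (wm A).
Local Notation j := (wj A).
Local Notation le := (wle A).

Lemma mA : forall a b c, m a (m b c) = m (m a b) c. Proof. apply HA. Qed.
Lemma mC : forall a b, m a b = m b a. Proof. apply HA. Qed.
Lemma jA : forall a b c, j a (j b c) = j (j a b) c. Proof. apply HA. Qed.
Lemma jC : forall a b, j a b = j b a. Proof. apply HA. Qed.
Lemma mabs : forall a b, m a (j a b) = a. Proof. apply HA. Qed.
Lemma jabs : forall a b, j a (m a b) = a. Proof. apply HA. Qed.
Lemma mdist : forall a b c, m a (j b c) = j (m a b) (m a c). Proof. apply HA. Qed.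
Lemma j0 : forall a, j a (w0 A) = a. Proof. apply HA. Qed.
Lemma m1 : forall a, m a (w1 A) = a. Proof. apply HA. Qed.

Lemma mid : forall a, m a a = a.
Proof. intro a. rewrite <- (jabs a a) at 2. apply mabs. Qed.

Lemma le_refl : forall a, le a a. Proof. exact mid. Qed.
Lemma le_trans : forall a b c, le a b -> le b c -> le a c.
Proof. unfold wle; intros a b c H1 H2. rewrite <- H1, <- mA, H2. reflexivity. Qed.
Lemma le_antisym : forall a b, le a b -> le b a -> a = b.
Proof. unfold wle; intros a b H1 H2. rewrite <- H1, mC. exact H2. Qed.
Lemma le_ml : forall a b, le (m a b) a.
Proof. unfold wle; intros a b. rewrite (mC (m a b) a), mA, mid. reflexivity. Qed.
Lemma le_mr : forall a b, le (m a b) b.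
Proof. unfold wle; intros a b. rewrite <- mA, mid. reflexivity. Qed.
Lemma le_glb : forall a b c, le c a -> le c b -> le c (m a b).
Proof. unfold wle; intros a b c H1 H2. rewrite mA, H1, H2. reflexivity. Qed.
Lemma le_jl : forall a b, le a (j a b). Proof. exact mabs. Qed.
Lemma le_jr : forall a b, le b (j a b). Proof. intros; rewrite jC; apply le_jl. Qed.
Lemma le_lub : forall a b c, le a c -> le b c -> le (j a b) c.
Proof. unfold wle; intros a b c H1 H2. rewrite mC, mdist, (mC c a), (mC c b), H1, H2. reflexivity. Qed.
Lemma le_0 : forall a, le (w0 A) a.
Proof. unfold wle; intros a. rewrite <- (j0 a) at 1. rewrite jC. apply mabs. Qed.
Lemma le_1 : forall a, le a (w1 A). Proof. exact m1. Qed.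
Lemma le_mono_m : forall a b c, le a b -> le (m a c) (m b c).
Proof. intros. apply le_glb. eapply le_trans; [apply le_ml|assumption]. apply le_mr. Qed.
Lemma le_of_eq_m : forall a b, a = m a b -> le a b.
Proof. unfold wle. intros a b H. symmetry; exact H. Qed.
Lemma le_of_eq_j : forall a b, b = j a b -> le a b.
Proof. intros a b H. rewrite H. apply le_jl. Qed.
Lemma le_j_eq : forall a b, le a b -> j a b = b.
Proof. unfold wle; intros a b H. rewrite <- H. rewrite jC, mC. apply jabs. Qed.

Variable P : wcar A -> Prop.
Variable HP : prime_filter A P.
Lemma pf_up : forall a b, P a -> le a b -> P b. Proof. apply HP. Qed.
Lemma pf_m : forall a b, P (m a b) <-> P a /\ P b.
Proof. split. intro H; split; eapply pf_up; eauto using le_ml, le_mr.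
 intros [H1 H2]; apply HP; auto. Qed.
Lemma pf_j : forall a b, P (j a b) <-> P a \/ P b.
Proof. split. apply HP. intros [H|H]; eapply pf_up; eauto using le_jl, le_jr. Qed.
Lemma pf_1 : P (w1 A). Proof. apply HP. Qed.
Lemma pf_0 : ~ P (w0 A). Proof. apply HP. Qed.
End Lat.

Section Exist.
Variable A : whb_ops.
Variable HA : bdl_axioms (wm A) (wj A) (w0 A) (w1 A).
Local Notation m := (wm A).
Local Notation j := (wj A).
Local Notation le := (wle A).
Variable st : wcar A -> wcar A -> Prop.
Hypothesis st_refl : forall x, st x x.
Hypothesis st_trans : forall x y z, st x y -> st y z -> st x z.
Hypothesis st_mono : forall x x' y y', le x' x -> st x y -> le y y' -> st x' y'.
Hypothesis st_meet : forall x y y', st x y -> st x y' -> st x (m y y').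
Hypothesis st_join : forall x y z, st x z -> st y z -> st (j x y) z.

Definition Fam (a b : wcar A) (G : wcar A -> Prop) : Prop :=
  (forall x y, G x -> G y -> G (m x y)) /\ (forall x y, G x -> st x y -> G y) /\ G a /\ ~ G b.

Lemma exist_pf a b : (forall h, le a h -> ~ st h b) ->
  exists Q, prime_filter A Q /\ Q a /\ ~ Q b /\ (forall x y, st x y -> Q x -> Q y).
Proof.
  intro Hab.
  destruct (@ZornW.my_zorn (wcar A) (fun G : wcar A -> Prop => Fam a b G \/ forall x, ~ G x)) as [Q [PQ Qmax]].
  { intros F FP tot.
    destruct (classic (exists X, F X /\ exists x, X x)) as [[X0 [FX0 [x0 X0x0]]]|Hn].
    - left.
      assert (HF : forall X x, F X -> X x -> Fam a b X).
      { intros X x FX Xx. destruct (FP X FX) as [H|H]; [exact H| exfalso; exact (H x Xx)]. }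
      split; [|split; [|split]].
      + intros x y [X1 [F1 X1x]] [X2 [F2 X2y]].
        destruct (tot X1 X2 F1 F2) as [H|H].
        * exists X2. split; auto. apply (HF X2 y F2 X2y); auto.
        * exists X1. split; auto. apply (HF X1 x F1 X1x); auto.
      + intros x y [X1 [F1 X1x]] sxy. exists X1. split; auto.
        apply (proj1 (proj2 (HF X1 x F1 X1x)) x y); auto.
      + exists X0. split; auto. apply (HF X0 x0 FX0 X0x0).
      + intros [X1 [F1 X1b]]. apply (HF X1 b F1 X1b). exact X1b.
    - right. intros x [X [FX Xx]]. apply Hn. exists X; split; eauto. }
  set (F0 := fun y => exists h, le a h /\ st h y).
  assert (FamF0 : Fam a b F0).
  { split; [|split; [|split]].
    - intros x y [h1 [Hh1 s1]] [h2 [Hh2 s2]]. exists (m h1 h2). split.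
      apply le_glb; auto.
      apply st_meet; [apply (st_mono h1 _ x x)|apply (st_mono h2 _ y y)]; auto using le_ml, le_mr, le_refl.
    - intros u v [h [Hh s]] suv. exists h. split; eauto.
    - exists a. split; auto using le_refl.
    - intros [h [Hh s]]. exact (Hab h Hh s). }
  assert (FQ : Fam a b Q).
  { destruct PQ as [H|H]; auto. exfalso.
    apply (H a). apply (Qmax F0); [intros x Hx; exfalso; exact (H x Hx)| left; exact FamF0|].
    apply FamF0. }
  destruct FQ as [Qm [Qst [Qa Qb]]].
  assert (Qup : forall x y, Q x -> le x y -> Q y).
  { intros x y Qx Hxy. apply (Qst x y Qx). eapply st_mono; eauto using le_refl. }
  exists Q. split; [|split; [exact Qa|split; [exact Qb|exact (fun x y s q => Qst x y q s)]]].
  split; [|split; [exact Qup|split; [exact Qm|split]]].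
  - apply (Qup a); auto. apply le_1; auto.
  - intro Q0. apply Qb. apply (Qup _ _ Q0). apply le_0; auto.
  - intros c d Qcd. apply NNPP. intro Hn.
    assert (Hc : forall c, ~ Q c -> exists g, Q g /\ st (m g c) b).
    { intros c0 nc0. apply NNPP. intro Hn0.
      set (G := fun y => exists g, Q g /\ st (m g c0) y).
      assert (FG : Fam a b G).
      { split; [|split; [|split]].
        - intros u v [g1 [Q1 s1]] [g2 [Q2 s2]]. exists (m g1 g2). split; auto.
          apply st_meet; [apply (st_mono (m g1 c0) _ u u)|apply (st_mono (m g2 c0) _ v v)]; auto using le_refl;
          apply le_mono_m; auto using le_ml, le_mr.
        - intros x y [g [Qg s]] sxy. exists g; split; eauto.
        - exists a. split; auto. eapply st_mono; eauto using le_refl, le_ml.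
        - intros [g [Qg s]]. apply Hn0. exists g; auto. }
      apply nc0. apply (Qmax G).
      - intros x Qx. exists x. split; auto. eapply st_mono; eauto using le_refl, le_ml.
      - left; exact FG.
      - exists a. split; auto. eapply st_mono; eauto using le_refl, le_mr. }
    destruct (Hc c (fun H => Hn (or_introl H))) as [g1 [Q1 s1]].
    destruct (Hc d (fun H => Hn (or_intror H))) as [g2 [Q2 s2]].
    apply Qb. apply (Qst (m (m g1 g2) (j c d))).
    + apply Qm; auto.
    + rewrite mdist; auto. apply st_join.
      * eapply st_mono; [|exact s1|apply le_refl; auto]. apply le_mono_m; auto. apply le_ml; auto.
      * eapply st_mono; [|exact s2|apply le_refl; auto]. apply le_mono_m; auto. apply le_mr; auto.
Qed.
End Exist.

Section Clopen.
Variable A : whb_ops.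

Lemma tau_open_ext (U V : Xp A -> Prop) : (forall x, U x <-> V x) -> tau_open U -> tau_open V.
Proof.
  intros H HU x Vx. destruct (HU x (proj2 (H x) Vx)) as [l [H1 H2]].
  exists l. split; auto. intros y Hy. apply H, H2, Hy.
Qed.

Lemma clopen_ext (U V : Xp A -> Prop) : (forall x, U x <-> V x) -> clopen U -> clopen V.
Proof.
  intros H [H1 H2]. split. eapply tau_open_ext; eauto.
  eapply tau_open_ext; [|exact H2]. intro x. split; intros Hn Hx; apply Hn, H, Hx.
Qed.

Lemma tau_open_and (U V : Xp A -> Prop) : tau_open U -> tau_open V -> tau_open (fun x => U x /\ V x).
Proof.
  intros HU HV x [Ux Vx]. destruct (HU x Ux) as [l1 [H1 H1']]. destruct (HV x Vx) as [l2 [H2 H2']].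
  exists (l1 ++ l2). split.
  - intros c Hc. apply in_app_or in Hc. destruct Hc; auto.
  - intros y Hy. split; [apply H1'|apply H2']; intros c Hc; apply Hy, in_or_app; auto.
Qed.

Lemma tau_open_or (U V : Xp A -> Prop) : tau_open U -> tau_open V -> tau_open (fun x => U x \/ V x).
Proof.
  intros HU HV x [Ux|Vx].
  - destruct (HU x Ux) as [l [H1 H2]]. exists l. split; auto.
  - destruct (HV x Vx) as [l [H1 H2]]. exists l. split; auto.
Qed.

Lemma clopen_neg (U : Xp A -> Prop) : clopen U -> clopen (fun x => ~ U x).
Proof.
  intros [H1 H2]. split; auto. eapply tau_open_ext; [|exact H1].
  intro x. split; [tauto|]. intro H. apply NNPP, H.
Qed.

Lemma clopen_and (U V : Xp A -> Prop) : clopen U -> clopen V -> clopen (fun x => U x /\ V x).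
Proof.
  intros [H1 H2] [H3 H4]. split. apply tau_open_and; auto.
  eapply tau_open_ext; [|apply (tau_open_or _ _ H2 H4)]. intro x. split; [tauto|].
  intro H. apply NNPP. tauto.
Qed.

Lemma clopen_or (U V : Xp A -> Prop) : clopen U -> clopen V -> clopen (fun x => U x \/ V x).
Proof.
  intros [H1 H2] [H3 H4]. split. apply tau_open_or; auto.
  eapply tau_open_ext; [|apply (tau_open_and _ _ H2 H4)]. intro x. tauto.
Qed.

Lemma clopen_True : clopen (fun _ : Xp A => True). Proof. apply full_clopen. Qed.
Lemma clopen_False : clopen (fun _ : Xp A => False).
Proof. eapply clopen_ext; [|apply clopen_neg, clopen_True]. intro; tauto. Qed.

Lemma clopen_sigma (a : wcar A) : clopen (sigmaA a).
Proof.
  split.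
  - intros x Hx. exists [(a, true)]. split.
    + intros c [<-|[]]. exact Hx.
    + intros y Hy. exact (Hy (a,true) (or_introl eq_refl)).
  - intros x Hx. exists [(a, false)]. split.
    + intros c [<-|[]]. exact Hx.
    + intros y Hy. exact (Hy (a,false) (or_introl eq_refl)).
Qed.

Lemma clopen_list {X : Type} (F : X -> Xp A -> Prop) (l : list X) :
  (forall x, clopen (F x)) -> clopen (fun P => forall x, In x l -> F x P).
Proof.
  intro HF. induction l as [|x l IH].
  - eapply clopen_ext; [|apply clopen_True]. intro P; simpl; split; [intros _ x []|auto].
  - eapply clopen_ext; [|apply (clopen_and _ _ (HF x) IH)]. intro P; simpl. split.
    + intros [H1 H2] y [<-|Hy]; auto.
    + intros H; split; auto.
Qed.

Lemma toClop_proj (V : Xp A -> Prop) : clopen V -> proj1_sig (toClop V) = V.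
Proof.
  intro H. unfold toClop. destruct (excluded_middle_informative (clopen V)) as [h|h].
  reflexivity. contradiction.
Qed.

Lemma toClop_iff (V : Xp A -> Prop) : clopen V -> forall x, proj1_sig (toClop V) x <-> V x.
Proof. intros H x. rewrite toClop_proj; tauto. Qed.

Lemma Clop_eq (U V : Clop A) : (forall x, proj1_sig U x <-> proj1_sig V x) -> U = V.
Proof.
  destruct U as [U HU], V as [V HV]. simpl. intro H.
  assert (U = V) by (apply functional_extensionality; intro x; apply propositional_extensionality; auto).
  subst V. f_equal. apply proof_irrelevance.
Qed.

Lemma Clop_eq_proj (U V : Clop A) : U = V -> forall x, proj1_sig U x <-> proj1_sig V x.
Proof. intros ->; tauto. Qed.

Lemma C_m (U V : Clop A) x : proj1_sig (tm (T A) U V) x <-> proj1_sig U x /\ proj1_sig V x.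
Proof. simpl. apply toClop_iff, clopen_and; apply proj2_sig. Qed.
Lemma C_j (U V : Clop A) x : proj1_sig (tj (T A) U V) x <-> proj1_sig U x \/ proj1_sig V x.
Proof. simpl. apply toClop_iff, clopen_or; apply proj2_sig. Qed.
Lemma C_n (U : Clop A) x : proj1_sig (tn (T A) U) x <-> ~ proj1_sig U x.
Proof. simpl. apply toClop_iff, clopen_neg; apply proj2_sig. Qed.
Lemma C_0 x : proj1_sig (t0 (T A)) x <-> False.
Proof. simpl. apply toClop_iff, clopen_False. Qed.
Lemma C_1 x : proj1_sig (t1 (T A)) x <-> True.
Proof. simpl. apply toClop_iff, clopen_True. Qed.

Definition sig' (a : wcar A) : Clop A := toClop (sigmaA a).
Lemma C_sig a x : proj1_sig (sig' a) x <-> proj1_sig x a.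
Proof. unfold sig'. rewrite toClop_proj by apply clopen_sigma. unfold sigmaA. tauto. Qed.

End Clopen.

Section GH.
Variable A : whb_ops.
Variable HW : is_whb A.
Local Notation m := (wm A).
Local Notation j := (wj A).
Local Notation le := (wle A).
Local Notation wi := (wi A).
Local Notation wc := (wc A).

Lemma HB : bdl_axioms m j (w0 A) (w1 A). Proof. apply HW. Qed.
Lemma i_refl : forall a, wi a a = w1 A. Proof. apply HW. Qed.
Lemma i_meet : forall a b c, wi a (m b c) = m (wi a b) (wi a c). Proof. apply HW. Qed.
Lemma i_join : forall a b c, wi (j a b) c = m (wi a c) (wi b c). Proof. apply HW. Qed.
Lemma i_trans : forall a b c, le (m (wi a b) (wi b c)) (wi a c). Proof. apply HW. Qed.
Lemma c_refl : forall a, wc a a = w0 A. Proof. apply HW. Qed.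
Lemma c_join : forall a b c, wc (j a b) c = j (wc a c) (wc b c). Proof. apply HW. Qed.
Lemma c_meet : forall a b c, wc a (m b c) = j (wc a b) (wc a c). Proof. apply HW. Qed.
Lemma c_trans : forall a b c, le (wc a c) (j (wc a b) (wc b c)). Proof. apply HW. Qed.

Lemma wi_anti x x' y : le x' x -> le (wi x y) (wi x' y).
Proof.
  intro H. pose proof (i_join x' x y) as E. rewrite (le_j_eq A HB _ _ H) in E.
  unfold wle. rewrite (mC A HB). symmetry. exact E.
Qed.
Lemma wi_mono x y y' : le y y' -> le (wi x y) (wi x y').
Proof.
  intro H. pose proof (i_meet x y y') as E. unfold wle in H. rewrite H in E.
  unfold wle. symmetry. exact E.
Qed.
Lemma wc_mono x x' y : le x x' -> le (wc x y) (wc x' y).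
Proof.
  intro H. pose proof (c_join x x' y) as E. rewrite (le_j_eq A HB _ _ H) in E.
  apply (le_of_eq_j A HB). exact E.
Qed.
Lemma wc_anti x y y' : le y y' -> le (wc x y') (wc x y).
Proof.
  intro H. pose proof (c_meet x y y') as E. unfold wle in H. rewrite H in E.
  apply (le_of_eq_j A HB). rewrite (jC A HB). exact E.
Qed.

Section PF.
Variable P : Xp A.
Let Pp := proj2_sig P.
Local Notation "P@ a" := (proj1_sig P a) (at level 10).

Lemma exist_R a b : ~ P@ (wi a b) ->
  exists Q : Xp A, RA P Q /\ proj1_sig Q a /\ ~ proj1_sig Q b.
Proof.
  intro Hn.
  destruct (exist_pf A HB (fun u v => P@ (wi u v))) with (a := a) (b := b)
    as [Q0 [pf [Qa [Qb Qst]]]].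
  - intro x. rewrite i_refl. apply (pf_1 A _ Pp).
  - intros x y z H1 H2. apply (pf_up A _ Pp (m (wi x y) (wi y z))); [|apply i_trans].
    apply (pf_m A HB _ Pp); auto.
  - intros x x' y y' H1 H2 H3. apply (pf_up A _ Pp _ _ H2).
    apply (le_trans A HB _ (wi x' y)). apply wi_anti; auto. apply wi_mono; auto.
  - intros x y y' H1 H2. rewrite i_meet. apply (pf_m A HB _ Pp); auto.
  - intros x y z H1 H2. rewrite i_join. apply (pf_m A HB _ Pp); auto.
  - intros h Hh H. apply Hn. apply (pf_up A _ Pp _ _ H). apply wi_anti; auto.
  - exists (exist _ Q0 pf). split; [|split; auto]. intros u v H1 H2. simpl in *. eapply Qst; eauto.
Qed.

Lemma exist_S a b : P@ (wc a b) ->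
  exists Q : Xp A, SA P Q /\ proj1_sig Q a /\ ~ proj1_sig Q b.
Proof.
  intro Hp.
  destruct (exist_pf A HB (fun u v => ~ P@ (wc u v))) with (a := a) (b := b)
    as [Q0 [pf [Qa [Qb Qst]]]].
  - intro x. rewrite c_refl. apply (pf_0 A _ Pp).
  - intros x y z H1 H2 H3.
    pose proof (pf_up A _ Pp _ _ H3 (c_trans x y z)) as H4.
    apply (pf_j A HB _ Pp) in H4. tauto.
  - intros x x' y y' H1 H2 H3 H4. apply H2. apply (pf_up A _ Pp _ _ H4).
    apply (le_trans A HB _ (wc x y')). apply wc_mono; auto. apply wc_anti; auto.
  - intros x y y' H1 H2 H3. rewrite c_meet in H3. apply (pf_j A HB _ Pp) in H3. tauto.
  - intros x y z H1 H2 H3. rewrite c_join in H3. apply (pf_j A HB _ Pp) in H3. tauto.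
  - intros h Hh H. apply H. apply (pf_up A _ Pp _ _ Hp). apply wc_mono; auto.
  - exists (exist _ Q0 pf). split; [|split; auto]. intros u v H1 H2. simpl in *.
    apply NNPP. intro H3. apply H2. eapply Qst; eauto.
Qed.
End PF.

Lemma C_G (U : Clop A) {X : Type} (f g : X -> wcar A) (l : list X) :
  (forall P, proj1_sig U P <-> forall x, In x l -> proj1_sig P (f x) -> proj1_sig P (g x)) ->
  forall P, proj1_sig (tGo (T A) U) P <-> forall x, In x l -> proj1_sig P (wi (f x) (g x)).
Proof.
  intros HU. simpl.
  assert (E : GA (proj1_sig U) = fun P : Xp A => forall x, In x l -> proj1_sig P (wi (f x) (g x))).
  { apply functional_extensionality. intro P. apply propositional_extensionality. unfold GA. split.
    - intros H x Hx. apply NNPP. intro Hn. destruct (exist_R P _ _ Hn) as [Q [RQ [Qa Qb]]].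
      apply Qb. apply (proj1 (HU Q) (H Q RQ) x Hx Qa).
    - intros H Q RQ. apply HU. intros x Hx Qa. apply (RQ _ _ (H x Hx) Qa). }
  rewrite E. apply toClop_iff. apply clopen_list. intro x. apply clopen_sigma.
Qed.

Lemma C_H (U : Clop A) {X : Type} (f g : X -> wcar A) (l : list X) :
  (forall P, proj1_sig U P <-> forall x, In x l -> proj1_sig P (f x) -> proj1_sig P (g x)) ->
  forall P, proj1_sig (tHo (T A) U) P <-> forall x, In x l -> ~ proj1_sig P (wc (f x) (g x)).
Proof.
  intros HU. simpl.
  assert (E : HA (proj1_sig U) = fun P : Xp A => forall x, In x l -> ~ proj1_sig P (wc (f x) (g x))).
  { apply functional_extensionality. intro P. apply propositional_extensionality. unfold HA. split.
    - intros H x Hx Hp. destruct (exist_S P _ _ Hp) as [Q [SQ [Qa Qb]]].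
      apply Qb. apply (proj1 (HU Q) (H Q SQ) x Hx Qa).
    - intros H Q SQ. apply HU. intros x Hx Qa. apply NNPP. intro Hn.
      apply (H x Hx). apply (SQ _ _ Qa Hn). }
  rewrite E. apply toClop_iff. apply clopen_list. intro x. apply clopen_neg, clopen_sigma.
Qed.

Lemma separate a b : ~ le a b -> exists Q : Xp A, proj1_sig Q a /\ ~ proj1_sig Q b.
Proof.
  intro Hn.
  destruct (exist_pf A HB (fun u v => le u v)) with (a := a) (b := b)
    as [Q0 [pf [Qa [Qb Qst]]]].
  - apply (le_refl A HB).
  - apply (le_trans A HB).
  - intros x x' y y' H1 H2 H3. apply (le_trans A HB _ x); auto. apply (le_trans A HB _ y); auto.
  - intros; apply (le_glb A HB); auto.
  - intros; apply (le_lub A HB); auto.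
  - intros h Hh H. apply Hn. apply (le_trans A HB _ h); auto.
  - exists (exist _ Q0 pf). simpl. auto.
Qed.

Lemma sig'_inj a b : sig' A a = sig' A b -> a = b.
Proof.
  intro E. pose proof (Clop_eq_proj _ _ _ E) as H.
  apply NNPP. intro Hn.
  assert (~ le a b \/ ~ le b a) as [H1|H1].
  { apply NNPP. intro H2. apply Hn. apply (le_antisym A HB); apply NNPP; tauto. }
  - destruct (separate _ _ H1) as [Q [Qa Qb]]. apply Qb. apply (C_sig A), H, (C_sig A), Qa.
  - destruct (separate _ _ H1) as [Q [Qa Qb]]. apply Qb. apply (C_sig A), H, (C_sig A), Qa.
Qed.
End GH.
From Stdlib Require Import Setoid.

Fixpoint tr (t : wterm) : tterm :=
  match t with
  | wvar n => tvar n
  | wmeet s u => tmeet (tr s) (tr u)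
  | wjoin s u => tjoin (tr s) (tr u)
  | wimp s u => tG (tjoin (tneg (tr s)) (tr u))
  | wcoimp s u => tneg (tH (tneg (tmeet (tr s) (tneg (tr u)))))
  | wzero => tzero
  | wone => tone
  end.

Lemma tr_M (B : tense_ops) w t : weval (M B) w t = teval B w (tr t).
Proof.
  induction t; cbn [weval teval tr]; try rewrite IHt1, IHt2; reflexivity.
Qed.

Lemma In1 {X} (p : X) (Q : X -> Prop) : (forall x, In x [p] -> Q x) <-> Q p.
Proof. split. intro H; apply H; left; auto. intros H x [<-|[]]; auto. Qed.

Lemma tr_T (A : whb_ops) (HW : is_whb A) v t :
  teval (T A) (fun i => sig' A (v i)) (tr t) = sig' A (weval A v t).
Proof.
  pose proof (HB A HW) as HB.
  induction t; cbn [weval teval tr]; try rewrite IHt1; try rewrite IHt2; try reflexivity;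
    apply Clop_eq; intro P; pose proof (proj2_sig P) as Pp.
  - rewrite C_m, !C_sig. symmetry. apply (pf_m A HB _ Pp).
  - rewrite C_j, !C_sig. symmetry. apply (pf_j A HB _ Pp).
  - rewrite (C_G A HW _ (fun p => fst p) (fun p => snd p) [(weval A v t1, weval A v t2)]).
    + rewrite In1, C_sig. simpl. tauto.
    + intro Q. rewrite C_j, C_n, !C_sig, In1. simpl. split; [tauto|].
      intro H. destruct (classic (proj1_sig Q (weval A v t1))); tauto.
  - rewrite C_n.
    rewrite (C_H A HW _ (fun p => fst p) (fun p => snd p) [(weval A v t1, weval A v t2)]).
    + rewrite In1, C_sig. simpl. split; [apply NNPP|tauto].
    + intro Q. rewrite C_n, C_m, C_n, !C_sig, In1. simpl. split; [|tauto].
      intros H H1. apply NNPP. tauto.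
  - rewrite C_0, C_sig. split; [tauto|]. apply (pf_0 A _ Pp).
  - rewrite C_1, C_sig. split; [|tauto]. intros _. apply (pf_1 A _ Pp).
Qed.

Section Bool.
Variable B : tense_ops.
Variable HBo : is_boolean B.
Let HL : bdl_axioms (wm (M B)) (wj (M B)) (w0 (M B)) (w1 (M B)) := proj1 HBo.
Lemma b_compl_m : forall a, tm B a (tn B a) = t0 B. Proof. apply HBo. Qed.
Lemma b_compl_j : forall a, tj B a (tn B a) = t1 B. Proof. apply HBo. Qed.
Lemma bmC : forall a b, tm B a b = tm B b a. Proof. exact (mC (M B) HL). Qed.
Lemma bjC : forall a b, tj B a b = tj B b a. Proof. exact (jC (M B) HL). Qed.
Lemma bm1 : forall a, tm B a (t1 B) = a. Proof. exact (m1 (M B) HL). Qed.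
Lemma bj0 : forall a, tj B a (t0 B) = a. Proof. exact (j0 (M B) HL). Qed.
Lemma bmdist : forall a b c, tm B a (tj B b c) = tj B (tm B a b) (tm B a c). Proof. exact (mdist (M B) HL). Qed.
Lemma b_1m : forall a, tm B (t1 B) a = a.
Proof. intro a. rewrite bmC. apply bm1. Qed.
Lemma b_0j : forall a, tj B (t0 B) a = a.
Proof. intro a. rewrite bjC. apply bj0. Qed.
Lemma b_n1 : tn B (t1 B) = t0 B.
Proof. rewrite <- (b_compl_m (t1 B)). symmetry. apply b_1m. Qed.
Lemma b_nn : forall a, tn B (tn B a) = a.
Proof.
  intro a. set (n := tn B a). set (x := tn B n).
  assert (E1 : x = tm B x a).
  { transitivity (tm B x (tj B a n)).
    - unfold n. rewrite b_compl_j. symmetry. apply bm1.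
    - rewrite bmdist. rewrite (bmC x n). unfold x. rewrite b_compl_m. apply bj0. }
  assert (E2 : a = tm B a x).
  { transitivity (tm B a (tj B n x)).
    - unfold x. rewrite b_compl_j. symmetry. apply bm1.
    - rewrite bmdist. unfold n. rewrite b_compl_m. rewrite b_0j. reflexivity. }
  rewrite E1 at 1. rewrite bmC. symmetry. exact E2.
Qed.
End Bool.

Lemma pf_neg (B : tense_ops) (HBo : is_boolean B) (P : Xp (M B)) (a : tcar B) :
  proj1_sig P (tn B a) <-> ~ proj1_sig P a.
Proof.
  pose proof (proj2_sig P) as Pp. pose proof (proj1 HBo : bdl_axioms (wm (M B)) (wj (M B)) (w0 (M B)) (w1 (M B))) as HL.
  split.
  - intros H1 H2. apply (pf_0 (M B) _ Pp).
    pose proof (proj2 (pf_m (M B) HL _ Pp a (tn B a)) (conj H2 H1)) as H. simpl in H.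
    rewrite (b_compl_m B HBo) in H. exact H.
  - intros H. pose proof (pf_1 (M B) _ Pp) as H1. simpl in H1. rewrite <- (b_compl_j B HBo a) in H1.
    apply (pf_j (M B) HL _ Pp) in H1. tauto.
Qed.

Lemma beta (B : tense_ops) (HW : is_whb (M B)) (HBo : is_boolean B) v t :
  teval (T (M B)) (fun i => sig' (M B) (v i)) t = sig' (M B) (teval B v t).
Proof.
  pose proof (HB _ HW) as HL.
  induction t; cbn [teval]; try rewrite IHt1; try rewrite IHt2; try rewrite IHt; try reflexivity;
    apply Clop_eq; intro P; pose proof (proj2_sig P) as Pp.
  - rewrite C_m, !C_sig. symmetry. apply (pf_m (M B) HL _ Pp).
  - rewrite C_j, !C_sig. symmetry. apply (pf_j (M B) HL _ Pp).
  - rewrite C_n, !C_sig. symmetry. apply pf_neg; auto.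
  - rewrite C_0, C_sig. split; [tauto|]. apply (pf_0 (M B) _ Pp).
  - rewrite C_1, C_sig. split; [|tauto]. intros _. apply (pf_1 (M B) _ Pp).
  - rewrite (C_G (M B) HW _ (fun _ : unit => t1 B) (fun _ => teval B v t) [tt]).
    + rewrite In1, C_sig. simpl. rewrite (b_n1 B HBo), (b_0j B HBo). tauto.
    + intro Q. rewrite C_sig, In1. split; auto. intros H. apply H. apply (pf_1 (M B) _ (proj2_sig Q)).
  - rewrite (C_H (M B) HW _ (fun _ : unit => t1 B) (fun _ => teval B v t) [tt]).
    + rewrite In1, C_sig. simpl. unfold tP. rewrite (b_1m B HBo), (b_nn B HBo).
      rewrite (pf_neg B HBo). split; [apply NNPP|tauto].
    + intro Q. rewrite C_sig, In1. split; auto. intros H. apply H. apply (pf_1 (M B) _ (proj2_sig Q)).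
Qed.

Definition cl := list (wterm * wterm).
Definition cjoin (l1 l2 : cl) : cl :=
  flat_map (fun p => map (fun q => (wmeet (fst p) (fst q), wjoin (snd p) (snd q))) l2) l1.
Definition cneg (l : cl) : cl :=
  fold_right (fun p acc => cjoin [(wone, fst p); (snd p, wzero)] acc) [(wone, wzero)] l.
Fixpoint cnf (t : tterm) : cl :=
  match t with
  | tvar i => [(wone, wvar i)]
  | tmeet s u => cnf s ++ cnf u
  | tjoin s u => cjoin (cnf s) (cnf u)
  | tneg s => cneg (cnf s)
  | tzero => [(wone, wzero)]
  | tone => []
  | tG s => map (fun p => (wone, wimp (fst p) (snd p))) (cnf s)
  | tH s => map (fun p => (wcoimp (fst p) (snd p), wzero)) (cnf s)
  end.

Definition SDen (A : whb_ops) (w : nat -> wcar A) (l : cl) (P : Xp A) : Prop :=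
  forall p, In p l -> proj1_sig P (weval A w (fst p)) -> proj1_sig P (weval A w (snd p)).

Section SD.
Variable A : whb_ops.
Variable HW : is_whb A.
Variable w : nat -> wcar A.
Variable P : Xp A.
Let HL := HB A HW.
Let Pp := proj2_sig P.
Local Notation "P@ a" := (proj1_sig P (weval A w a)) (at level 10).

Lemma SDen_app l1 l2 : SDen A w (l1 ++ l2) P <-> SDen A w l1 P /\ SDen A w l2 P.
Proof.
  unfold SDen. split.
  - intro H. split; intros p Hp; apply H; apply in_or_app; auto.
  - intros [H1 H2] p Hp. apply in_app_or in Hp. destruct Hp; auto.
Qed.

Lemma SDen_nil : SDen A w [] P <-> True.
Proof. unfold SDen. split; auto. intros _ p []. Qed.

Lemma SDen_cons p l : SDen A w (p :: l) P <-> (P@ (fst p) -> P@ (snd p)) /\ SDen A w l P.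
Proof.
  unfold SDen. split.
  - intro H. split. apply H; left; auto. intros q Hq; apply H; right; auto.
  - intros [H1 H2] q [<-|Hq]; auto.
Qed.

Lemma SDen_join l1 l2 : SDen A w (cjoin l1 l2) P <-> SDen A w l1 P \/ SDen A w l2 P.
Proof.
  split.
  - intro H. apply NNPP. intro Hn.
    assert (H1 : ~ SDen A w l1 P) by tauto. assert (H2 : ~ SDen A w l2 P) by tauto.
    unfold SDen in H1, H2.
    apply not_all_ex_not in H1. destruct H1 as [p1 H1].
    apply not_all_ex_not in H2. destruct H2 as [p2 H2].
    assert (In p1 l1 /\ P@ (fst p1) /\ ~ P@ (snd p1)) as [I1 [A1 B1]] by tauto.
    assert (In p2 l2 /\ P@ (fst p2) /\ ~ P@ (snd p2)) as [I2 [A2 B2]] by tauto.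
    assert (Hin : In (wmeet (fst p1) (fst p2), wjoin (snd p1) (snd p2)) (cjoin l1 l2)).
    { unfold cjoin. apply in_flat_map. exists p1. split; auto. apply in_map_iff. exists p2; auto. }
    specialize (H _ Hin). simpl in H.
    apply (pf_j A HL _ Pp) in H. tauto. apply (pf_m A HL _ Pp). auto.
  - intros H p Hp. unfold cjoin in Hp. apply in_flat_map in Hp. destruct Hp as [p1 [I1 Hp]].
    apply in_map_iff in Hp. destruct Hp as [p2 [<- I2]]. simpl.
    rewrite (pf_m A HL _ Pp), (pf_j A HL _ Pp). destruct H as [H|H]; intros [A1 A2].
    + left. apply (H p1 I1 A1).
    + right. apply (H p2 I2 A2).
Qed.

Lemma SDen_neg l : SDen A w (cneg l) P <-> ~ SDen A w l P.
Proof.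
  induction l as [|p l IH].
  - change (cneg []) with [(wone, wzero)]. rewrite SDen_cons, SDen_nil. simpl. pose proof (pf_1 A _ Pp). pose proof (pf_0 A _ Pp). tauto.
  - change (cneg (p :: l)) with (cjoin [(wone, fst p); (snd p, wzero)] (cneg l)). rewrite SDen_join, IH. repeat rewrite SDen_cons. repeat rewrite SDen_nil. simpl.
    pose proof (pf_1 A _ Pp). pose proof (pf_0 A _ Pp).
    destruct (classic (P@ (fst p))); destruct (classic (P@ (snd p))); tauto.
Qed.

Lemma SDen_mapG l :
  SDen A w (map (fun p => (wone, wimp (fst p) (snd p))) l) P <->
  forall p, In p l -> proj1_sig P (wi A (weval A w (fst p)) (weval A w (snd p))).
Proof.
  unfold SDen. split.
  - intros H p Hp. apply (H (wone, wimp (fst p) (snd p))). apply in_map_iff. exists p; auto.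
    apply (pf_1 A _ Pp).
  - intros H q Hq. apply in_map_iff in Hq. destruct Hq as [p [<- Hp]]. simpl. auto.
Qed.

Lemma SDen_mapH l :
  SDen A w (map (fun p => (wcoimp (fst p) (snd p), wzero)) l) P <->
  forall p, In p l -> ~ proj1_sig P (wc A (weval A w (fst p)) (weval A w (snd p))).
Proof.
  unfold SDen. split.
  - intros H p Hp H1. apply (pf_0 A _ Pp). apply (H (wcoimp (fst p) (snd p), wzero)); auto.
    apply in_map_iff. exists p; auto.
  - intros H q Hq. apply in_map_iff in Hq. destruct Hq as [p [<- Hp]]. simpl. intro H1.
    exfalso. exact (H p Hp H1).
Qed.
End SD.

Lemma cnf_ok (A : whb_ops) (HW : is_whb A) w t :
  forall P, proj1_sig (teval (T A) (fun i => sig' A (w i)) t) P <-> SDen A w (cnf t) P.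
Proof.
  induction t; intro P; cbn [teval cnf].
  - rewrite C_sig, SDen_cons, SDen_nil by exact HW. simpl. pose proof (pf_1 A _ (proj2_sig P)). tauto.
  - rewrite C_m, IHt1, IHt2, SDen_app. tauto.
  - rewrite C_j, IHt1, IHt2, SDen_join by exact HW. tauto.
  - rewrite C_n, IHt, SDen_neg by exact HW. tauto.
  - rewrite C_0, SDen_cons, SDen_nil by exact HW. simpl. pose proof (pf_1 A _ (proj2_sig P)). pose proof (pf_0 A _ (proj2_sig P)). tauto.
  - rewrite C_1, SDen_nil. tauto.
  - rewrite (C_G A HW _ (fun p => weval A w (fst p)) (fun p => weval A w (snd p)) (cnf t) IHt).
    rewrite SDen_mapG by exact HW. tauto.
  - rewrite (C_H A HW _ (fun p => weval A w (fst p)) (fun p => weval A w (snd p)) (cnf t) IHt).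
    rewrite SDen_mapH by exact HW. tauto.
Qed.

Fixpoint ch (l : cl) : cl :=
  match l with
  | [] => [(wone, wzero)]
  | p :: l' => flat_map (fun q => [(wmeet (snd p) (fst q), snd q); (fst q, wjoin (fst p) (snd q))]) (ch l')
  end.

Lemma ch_sem (A : whb_ops) (HW : is_whb A) w l (P : Xp A) :
  SDen A w l P <-> exists q, In q (ch l) /\ proj1_sig P (weval A w (fst q)) /\ ~ proj1_sig P (weval A w (snd q)).
Proof.
  pose proof (HB A HW) as HL. pose proof (proj2_sig P) as Pp.
  induction l as [|p l IH].
  - rewrite SDen_nil. split; [|tauto]. intros _. exists (wone, wzero). simpl. split; auto.
    split. apply (pf_1 A _ Pp). apply (pf_0 A _ Pp).
  - rewrite SDen_cons, IH by exact HW. cbn [ch]. split.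
    + intros [H1 [q [Iq [A1 B1]]]].
      destruct (classic (proj1_sig P (weval A w (snd p)))) as [Hb|Hb].
      * exists (wmeet (snd p) (fst q), snd q). split.
        apply in_flat_map. exists q. split; auto. left; auto.
        simpl. rewrite (pf_m A HL _ Pp). tauto.
      * exists (fst q, wjoin (fst p) (snd q)). split.
        apply in_flat_map. exists q. split; auto. right; left; auto.
        simpl. rewrite (pf_j A HL _ Pp). tauto.
    + intros [q' [Iq' H]]. apply in_flat_map in Iq'. destruct Iq' as [q [Iq [<-|[<-|[]]]]]; simpl in H.
      * rewrite (pf_m A HL _ Pp) in H. split; [tauto|]. exists q; tauto.
      * rewrite (pf_j A HL _ Pp) in H. split; [tauto|]. exists q; tauto.
Qed.

Definition eqn (q p : wterm * wterm) : wterm * wterm :=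
  (wmeet (wmeet (fst p) (fst q)) (wjoin (snd p) (snd q)), wmeet (fst p) (fst q)).

Lemma ineq_from (A : whb_ops) (HW : is_whb A) w l1 l2 :
  (exists P, SDen A w l1 P /\ ~ SDen A w l2 P) ->
  exists q p, In q (ch l1) /\ In p l2 /\ weval A w (fst (eqn q p)) <> weval A w (snd (eqn q p)).
Proof.
  pose proof (HB A HW) as HL.
  intros [P [H1 H2]]. pose proof (proj2_sig P) as Pp.
  apply (ch_sem A HW) in H1. destruct H1 as [q [Iq [Aq Bq]]].
  unfold SDen in H2. apply not_all_ex_not in H2. destruct H2 as [p H2].
  assert (In p l2 /\ proj1_sig P (weval A w (fst p)) /\ ~ proj1_sig P (weval A w (snd p))) as [Ip [Ap Bp]] by tauto.
  exists q, p. split; auto. split; auto. simpl. intro E.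
  assert (H : proj1_sig P (wm A (weval A w (fst p)) (weval A w (fst q)))) by (apply (pf_m A HL _ Pp); auto).
  rewrite <- E in H. apply (pf_m A HL _ Pp) in H. destruct H as [_ H].
  apply (pf_j A HL _ Pp) in H. tauto.
Qed.

Lemma ineq_to (A : whb_ops) (HW : is_whb A) w l1 l2 q p :
  In q (ch l1) -> In p l2 -> weval A w (fst (eqn q p)) <> weval A w (snd (eqn q p)) ->
  exists P, SDen A w l1 P /\ ~ SDen A w l2 P.
Proof.
  pose proof (HB A HW) as HL.
  intros Iq Ip E. simpl in E.
  destruct (separate A HW (wm A (weval A w (fst p)) (weval A w (fst q))) (wj A (weval A w (snd p)) (weval A w (snd q))))
    as [P [H1 H2]].
  { intro H. apply E. unfold wle in H. rewrite H. reflexivity. }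
  pose proof (proj2_sig P) as Pp.
  apply (pf_m A HL _ Pp) in H1. rewrite (pf_j A HL _ Pp) in H2.
  exists P. split.
  - apply (ch_sem A HW). exists q. tauto.
  - intro H. apply H2. left. apply (H p Ip). tauto.
Qed.

Definition fin (X : Type) : Prop := exists l : list X, forall x, In x l.

Fixpoint subs {X} (l : list X) : list (list X) :=
  match l with
  | [] => [[]]
  | x :: r => map (cons x) (subs r) ++ subs r
  end.

Lemma filter_subs {X} (f : X -> bool) l : In (filter f l) (subs l).
Proof.
  induction l as [|x l IH]; simpl. left; auto.
  destruct (f x); apply in_or_app; [left; apply in_map; auto| right; auto].
Qed.

Lemma fin_pred (X : Type) : fin X -> fin (X -> Prop).
Proof.
  intros [l Hl]. exists (map (fun s => fun x => In x s) (subs l)). intro U.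
  apply in_map_iff.
  exists (filter (fun x => if excluded_middle_informative (U x) then true else false) l).
  split; [|apply filter_subs].
  apply functional_extensionality. intro x. apply propositional_extensionality.
  rewrite filter_In. destruct (excluded_middle_informative (U x)) as [h|h]; split; intro H0.
  - exact h.
  - split; auto.
  - destruct H0 as [_ H0]; discriminate.
  - contradiction.
Qed.

Lemma fin_sig (X : Type) (Q : X -> Prop) : fin X -> fin {x : X | Q x}.
Proof.
  intros [l Hl].
  exists (flat_map (fun x => match excluded_middle_informative (Q x) with
                             | left h => [exist Q x h] | right _ => [] end) l).
  intros [x h]. apply in_flat_map. exists x. split; auto.
  destruct (excluded_middle_informative (Q x)) as [h'|n].
  - left. f_equal. apply proof_irrelevance.
  - contradiction.
Qed.

Lemma T_finite (A : whb_ops) : wfinite A -> tfinite (T A).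
Proof.
  intro H. unfold tfinite. simpl. unfold Clop, Xp.
  apply fin_sig, fin_pred, fin_sig, fin_pred. exact H.
Qed.

Lemma not_wsat (A : whb_ops) e : ~ wsat A e -> exists v, weval A v (fst e) <> weval A v (snd e).
Proof. intro H. unfold wsat in H. apply not_all_ex_not in H. exact H. Qed.
Lemma not_tsat (B : tense_ops) e : ~ tsat B e -> exists v, teval B v (fst e) <> teval B v (snd e).
Proof. intro H. unfold tsat in H. apply not_all_ex_not in H. exact H. Qed.

Theorem theorem6p19 (K : whb_ops -> Prop) (N : tense_ops -> Prop)
  (HK : whb_variety K) (HN : tense_variety N)
  (Hcomp : tense_companion K N) :
  whb_fmp K <-> tense_fmp N.
Proof.
  destruct HK as [EK HK]. destruct HN as [EN HN]. destruct Hcomp as [HKN HNK].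
  assert (KW : forall A, K A -> is_whb A) by (intros A HA; apply HK in HA; tauto).
  assert (NT : forall B, N B -> is_tense B) by (intros B HB'; apply HN in HB'; tauto).
  split.
  -
    intros Kf [t1 t2] [B [NB Hf]].
    destruct (not_tsat _ _ Hf) as [v Hv]. simpl in Hv.
    assert (KMB : K (M B)) by auto.
    pose proof (KW _ KMB) as HW. pose proof (proj1 (NT _ NB)) as HBo.
    assert (E : teval (T (M B)) (fun i => sig' (M B) (v i)) t1 <> teval (T (M B)) (fun i => sig' (M B) (v i)) t2).
    { rewrite !beta by auto. intro E. apply Hv. apply (sig'_inj _ HW _ _ E). }
    assert (Hd : exists P, ~ (SDen (M B) v (cnf t1) P <-> SDen (M B) v (cnf t2) P)).
    { apply NNPP. intro Hn. apply E. apply Clop_eq. intro P.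
      rewrite !(cnf_ok _ HW). apply NNPP. intro H. apply Hn. exists P. exact H. }
    assert (Gen : forall l1 l2, (exists P, SDen (M B) v l1 P /\ ~ SDen (M B) v l2 P) ->
       exists A', K A' /\ wfinite A' /\ exists w (P : Xp A'), SDen A' w l1 P /\ ~ SDen A' w l2 P).
    { intros l1 l2 H. destruct (ineq_from _ HW _ _ _ H) as [q [p [Iq [Ip Ee]]]].
      destruct (Kf (eqn q p)) as [A' [KA' [FA' NA']]].
      { exists (M B). split; [auto|]. intro S. apply Ee. apply S. }
      destruct (not_wsat _ _ NA') as [w Hw].
      exists A'. split; auto. split; auto. exists w. apply (ineq_to _ (KW _ KA') _ _ _ q p); auto. }
    assert (Hcase : exists A', K A' /\ wfinite A' /\ exists w (P : Xp A'),
              ~ (SDen A' w (cnf t1) P <-> SDen A' w (cnf t2) P)).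
    { destruct Hd as [P HP].
      destruct (classic (SDen (M B) v (cnf t1) P)) as [H1|H1].
      - destruct (Gen (cnf t1) (cnf t2)) as [A' [KA' [FA' [w [P' HP']]]]].
        + exists P. tauto.
        + exists A'. split; auto. split; auto. exists w, P'. tauto.
      - destruct (Gen (cnf t2) (cnf t1)) as [A' [KA' [FA' [w [P' HP']]]]].
        + exists P. tauto.
        + exists A'. split; auto. split; auto. exists w, P'. tauto. }
    destruct Hcase as [A' [KA' [FA' [w [P HP]]]]].
    exists (T A'). split; auto. split. apply T_finite; auto.
    intro S. specialize (S (fun i => sig' A' (w i))). simpl in S.
    apply HP. rewrite <- !(cnf_ok _ (KW _ KA')). rewrite S. tauto.
  -
    intros Nf [s1 s2] [A [KA Hf]].
    destruct (not_wsat _ _ Hf) as [v Hv]. simpl in Hv.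
    pose proof (KW _ KA) as HW.
    destruct (Nf (tr s1, tr s2)) as [B [NB [FB NS]]].
    { exists (T A). split; auto. intro S. specialize (S (fun i => sig' A (v i))). simpl in S.
      rewrite !tr_T in S by exact HW. apply Hv. apply (sig'_inj _ HW _ _ S). }
    exists (M B). split; auto. split.
    + exact FB.
    + intro S. apply NS. intro w. simpl. rewrite <- !tr_M. apply (S w).
Qed.
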